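(* Let $\beta>0$ and $d,k\in\mathbb{N}$ with $k\ge1$, and suppose $$1\le\beta\le 1+\tfrac12\log\!\Big(\frac{d}{8\max\{2k,28\}}\Big).$$ Let $P^1,\dots,P^d$ be independent samples from $\mathsf{Beta}(\beta,\beta)$. Then $$\mathbb{E}\Big[\max_{s\subset[d]:\,|s|=k}\ \sum_{j\in s}P^j\Big]\ge \frac34 k.$$
   Context: $\mathsf{Beta}(\alpha,\beta)$ is the distribution on $[0,1]$ with density proportional to $p^{\alpha-1}(1-p)^{\beta-1}$. $\log$ denotes the natural logarithm; $[d]=\{1,\dots,d\}$. *)

(* Defs.v *)
From Stdlib Require Import Reals List ClassicalEpsilon.
Open Scope R_scope.

(* Real power x^a for x >= 0, a >= 0, with the convention 0^0 = 1 and
   0^a = 0 for a > 0 (Stdlib's Rpower is only meaningful for x > 0). *)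
Definition rpow (x a : R) : R :=
  match Req_EM_T x 0 with
  | left _ => match Req_EM_T a 0 with left _ => 1 | right _ => 0 end
  | right _ => Rpower x a
  end.

(* Riemann integral of f over [a,b]; it is independent of the integrability
   proof (RiemannInt_P5).  For non-integrable f the value is unspecified;
   all integrands used below are continuous on the compact domain. *)
Definition integral (f : R -> R) (a b : R) : R :=
  epsilon (inhabits 0) (fun I => exists pr : Riemann_integrable f a b, RiemannInt pr = I).

Fixpoint iint (n : nat) (g : list R -> R) : R :=
  match n with
  | O => g nil
  | S m => integral (fun x => iint m (fun l => g (x :: l))) 0 1
  end.

Definition beta_fn (b : R) : R :=
  integral (fun p => rpow p (b - 1) * rpow (1 - p) (b - 1)) 0 1.

Definition beta_density (b p : R) : R :=
  rpow p (b - 1) * rpow (1 - p) (b - 1) / beta_fn b.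

(* Expectation of f(P^1,...,P^d) for P^1..P^d i.i.d. Beta(b,b):
   integral over [0,1]^d against the product density. *)
Definition E_beta (b : R) (d : nat) (f : list R -> R) : R :=
  iint d (fun l => f l * fold_right Rmult 1 (map (beta_density b) l)).

Fixpoint subsets (k : nat) (l : list nat) : list (list nat) :=
  match k with
  | O => nil :: nil
  | S k' => match l with
            | nil => nil
            | x :: t => map (cons x) (subsets k' t) ++ subsets k t
            end
  end.

(* Maximum of a list of reals (0 for the empty list). *)
Definition lmax (l : list R) : R :=
  match l with nil => 0 | x :: t => fold_right Rmax x t end.

(* max over s subset of [d] (indices 0..d-1), |s| = k, of sum_{j in s} P^j. *)
Definition topk_max (d k : nat) (P : list R) : R :=
  lmax (map (fun s => fold_right Rplus 0 (map (fun j => nth j P 0) s))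
            (subsets k (seq 0 d))).

(* Main.v *)
Require Import Defs.
From Stdlib Require Import Reals List Lra Lia Sorted ClassicalEpsilon FunctionalExtensionality PropExtensionality.
From Coquelicot Require Import Coquelicot.
Open Scope R_scope.


Lemma Rabs_le_between : forall x e, Rabs x <= e <-> -e <= x <= e.
Proof. intros; split; intros; [split|]; split_Rabs; lra. Qed.

Definition clamp (x : R) : R := Rmax 0 (Rmin x 1).

Lemma clamp_in x : 0 <= clamp x <= 1.
Proof. unfold clamp, Rmax, Rmin; repeat destruct Rle_dec; lra. Qed.

Lemma clamp_id x : 0 <= x <= 1 -> clamp x = x.
Proof. unfold clamp, Rmax, Rmin; repeat destruct Rle_dec; lra. Qed.

Lemma clamp_lip x y : Rabs (clamp x - clamp y) <= Rabs (x - y).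
Proof. unfold clamp, Rmax, Rmin; repeat destruct Rle_dec; split_Rabs; lra. Qed.

Definition unif (f : R -> R) : Prop :=
  forall eps, 0 < eps -> exists del, 0 < del /\
    forall x y, 0 <= x <= 1 -> 0 <= y <= 1 -> Rabs (x - y) < del -> Rabs (f x - f y) <= eps.

Lemma unif_cont_clamp f : unif f -> forall x, continuity_pt (fun y => f (clamp y)) x.
Proof.
  intros Hu x. unfold continuity_pt, continue_in, limit1_in, limit_in; simpl; unfold R_dist.
  intros eps Heps. destruct (Hu (eps/2)) as [del [Hd H]]; [lra|].
  exists del; split; [lra|]. intros y [_ Hy].
  apply Rle_lt_trans with (eps/2); [|lra].
  apply H; try apply clamp_in.
  eapply Rle_lt_trans; [apply clamp_lip|exact Hy].
Qed.

Lemma unif_exRInt f : unif f -> ex_RInt f 0 1.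
Proof.
  intros Hu.
  apply ex_RInt_ext with (fun y => f (clamp y)).
  { intros x Hx. rewrite Rmin_left in Hx by lra. rewrite Rmax_right in Hx by lra.
    rewrite clamp_id; lra. }
  apply (@ex_RInt_continuous R_CompleteNormedModule). intros z _.
  apply continuity_pt_filterlim. apply unif_cont_clamp; auto.
Qed.

Lemma integral_RInt f a b : ex_RInt f a b -> integral f a b = RInt f a b.
Proof.
  intros H. apply ex_RInt_Reals_0 in H.
  unfold integral.
  destruct (epsilon_spec (inhabits 0) (fun I => exists pr : Riemann_integrable f a b, RiemannInt pr = I))
    as [pr Hpr].
  { exists (RiemannInt H), H. reflexivity. }
  rewrite <- Hpr. symmetry. apply RInt_Reals.
Qed.

Lemma integral_ext01 f g : (forall x, 0 <= x <= 1 -> f x = g x) -> integral f 0 1 = integral g 0 1.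
Proof.
  intros Hfg. unfold integral. f_equal. apply functional_extensionality. intro I.
  apply propositional_extensionality. split.
  - intros [pr Hpr].
    assert (pr' : Riemann_integrable g 0 1).
    { apply Riemann_integrable_ext with f; auto.
      intros x Hx; rewrite Rmin_left in Hx by lra; rewrite Rmax_right in Hx by lra; auto. }
    exists pr'. rewrite <- Hpr, <- !RInt_Reals. apply RInt_ext.
    intros x Hx; rewrite Rmin_left in Hx by lra; rewrite Rmax_right in Hx by lra; symmetry; apply Hfg; lra.
  - intros [pr Hpr].
    assert (pr' : Riemann_integrable f 0 1).
    { apply Riemann_integrable_ext with g; auto.
      intros x Hx; rewrite Rmin_left in Hx by lra; rewrite Rmax_right in Hx by lra; symmetry; auto. }
    exists pr'. rewrite <- Hpr, <- !RInt_Reals. apply RInt_ext.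
    intros x Hx; rewrite Rmin_left in Hx by lra; rewrite Rmax_right in Hx by lra; apply Hfg; lra.
Qed.

Lemma integral_const c : integral (fun _ => c) 0 1 = c.
Proof.
  rewrite integral_RInt by apply ex_RInt_const. rewrite RInt_const.
  unfold scal; simpl; unfold mult; simpl. ring.
Qed.

Lemma integral_plus f g : ex_RInt f 0 1 -> ex_RInt g 0 1 ->
  integral (fun x => f x + g x) 0 1 = integral f 0 1 + integral g 0 1.
Proof.
  intros Hf Hg. rewrite !integral_RInt; auto.
  - apply (RInt_plus f g 0 1 Hf Hg).
  - apply (ex_RInt_plus f g 0 1 Hf Hg).
Qed.

Lemma integral_scal c f : ex_RInt f 0 1 ->
  integral (fun x => c * f x) 0 1 = c * integral f 0 1.
Proof.
  intros Hf. rewrite !integral_RInt; auto.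
  - apply (RInt_scal f 0 1 c Hf).
  - apply (ex_RInt_scal f 0 1 c Hf).
Qed.

Lemma integral_le f g : ex_RInt f 0 1 -> ex_RInt g 0 1 ->
  (forall x, 0 <= x <= 1 -> f x <= g x) -> integral f 0 1 <= integral g 0 1.
Proof.
  intros Hf Hg H. rewrite !integral_RInt; auto.
  apply RInt_le; auto; [lra|]. intros; apply H; lra.
Qed.

Definition UCg {X : Type} (D : X -> Prop) (C : R -> X -> X -> Prop) (F : X -> R) : Prop :=
  (exists M, forall x, D x -> Rabs (F x) <= M) /\
  (forall eps, 0 < eps -> exists del, 0 < del /\
     forall x y, D x -> D y -> C del x y -> Rabs (F x - F y) <= eps).

Definition Cmono {X : Type} (C : R -> X -> X -> Prop) :=
  forall d d' x y, d <= d' -> C d x y -> C d' x y.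

Lemma UCg_const {X} (D : X -> Prop) C c : UCg D C (fun _ => c).
Proof.
  split. exists (Rabs c); intros; lra.
  intros eps He; exists 1; split; [lra|]; intros. replace (c - c) with 0 by ring.
  rewrite Rabs_R0; lra.
Qed.

Lemma UCg_ext {X} (D : X -> Prop) C F G : (forall x, D x -> F x = G x) -> UCg D C F -> UCg D C G.
Proof.
  intros E [[M HM] H]. split.
  - exists M; intros x Hx; rewrite <- E; auto.
  - intros eps He; destruct (H eps He) as [del [Hd H']]; exists del; split; auto.
    intros x y Hx Hy Hc; rewrite <- !E; auto.
Qed.

Lemma UCg_add {X} (D : X -> Prop) C F G : Cmono C -> UCg D C F -> UCg D C G ->
  UCg D C (fun x => F x + G x).
Proof.
  intros Cm [[M1 HM1] H1] [[M2 HM2] H2]. split.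
  - exists (M1 + M2); intros x Hx. specialize (HM1 x Hx); specialize (HM2 x Hx).
    apply Rabs_le_between in HM1; apply Rabs_le_between in HM2; apply Rabs_le_between; lra.
  - intros eps He. destruct (H1 (eps/2)) as [d1 [Hd1 K1]]; [lra|].
    destruct (H2 (eps/2)) as [d2 [Hd2 K2]]; [lra|].
    exists (Rmin d1 d2); split; [apply Rmin_pos; auto|].
    intros x y Hx Hy Hc.
    assert (A1 := K1 x y Hx Hy (Cm _ _ _ _ (Rmin_l d1 d2) Hc)).
    assert (A2 := K2 x y Hx Hy (Cm _ _ _ _ (Rmin_r d1 d2) Hc)).
    apply Rabs_le_between in A1; apply Rabs_le_between in A2; apply Rabs_le_between; lra.
Qed.

Lemma UCg_mul {X} (D : X -> Prop) C F G : Cmono C -> UCg D C F -> UCg D C G ->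
  UCg D C (fun x => F x * G x).
Proof.
  intros Cm [[M1 HM1] H1] [[M2 HM2] H2]. split.
  - exists (M1 * M2); intros x Hx. specialize (HM1 x Hx); specialize (HM2 x Hx).
    rewrite Rabs_mult. apply Rmult_le_compat; auto using Rabs_pos.
  - intros eps He.
    set (A1 := Rabs M1 + 1). set (A2 := Rabs M2 + 1).
    assert (PA1 : 0 < A1) by (unfold A1; generalize (Rabs_pos M1); lra).
    assert (PA2 : 0 < A2) by (unfold A2; generalize (Rabs_pos M2); lra).
    destruct (H1 (eps/2/A2)) as [d1 [Hd1 K1]].
    { apply Rdiv_lt_0_compat; lra. }
    destruct (H2 (eps/2/A1)) as [d2 [Hd2 K2]].
    { apply Rdiv_lt_0_compat; lra. }
    exists (Rmin d1 d2); split; [apply Rmin_pos; auto|].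
    intros x y Hx Hy Hc.
    assert (B1 := K1 x y Hx Hy (Cm _ _ _ _ (Rmin_l d1 d2) Hc)).
    assert (B2 := K2 x y Hx Hy (Cm _ _ _ _ (Rmin_r d1 d2) Hc)).
    replace (F x * G x - F y * G y) with (F x * (G x - G y) + G y * (F x - F y)) by ring.
    eapply Rle_trans; [apply Rabs_triang|]. rewrite !Rabs_mult.
    assert (E1 : Rabs (F x) <= A1) by (specialize (HM1 x Hx); unfold A1; generalize (Rle_abs M1); lra).
    assert (E2 : Rabs (G y) <= A2) by (specialize (HM2 y Hy); unfold A2; generalize (Rle_abs M2); lra).
    assert (Rabs (F x) * Rabs (G x - G y) <= A1 * (eps/2/A1)).
    { apply Rmult_le_compat; auto using Rabs_pos. }
    assert (Rabs (G y) * Rabs (F x - F y) <= A2 * (eps/2/A2)).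
    { apply Rmult_le_compat; auto using Rabs_pos. }
    replace (A1 * (eps/2/A1)) with (eps/2) in * by (field; lra).
    replace (A2 * (eps/2/A2)) with (eps/2) in * by (field; lra).
    lra.
Qed.

Lemma UCg_scal {X} (D : X -> Prop) C c F : Cmono C -> UCg D C F -> UCg D C (fun x => c * F x).
Proof. intros; apply UCg_mul; auto; apply UCg_const. Qed.

Lemma UCg_opp {X} (D : X -> Prop) C F : Cmono C -> UCg D C F -> UCg D C (fun x => - F x).
Proof. intros. apply UCg_ext with (fun x => -1 * F x); [intros; ring|]. apply UCg_scal; auto. Qed.

Lemma UCg_sub {X} (D : X -> Prop) C F G : Cmono C -> UCg D C F -> UCg D C G ->
  UCg D C (fun x => F x - G x).
Proof. intros. apply UCg_add; auto. apply UCg_opp; auto. Qed.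

Definition D1 (x : R) := 0 <= x <= 1.
Definition C1 (d x y : R) := Rabs (x - y) < d.
Definition good (f : R -> R) := UCg D1 C1 f.

Lemma C1_mono : Cmono C1.
Proof. unfold Cmono, C1; intros; lra. Qed.

Lemma good_unif f : good f -> unif f.
Proof. intros [_ H] e He; destruct (H e He) as [d [Hd H']]; exists d; split; auto. Qed.

Lemma good_exRInt f : good f -> ex_RInt f 0 1.
Proof. intros; apply unif_exRInt, good_unif; auto. Qed.

Definition incube (n : nat) (l : list R) := List.length l = n /\ List.Forall (fun x => 0 <= x <= 1) l.
Definition close (d : R) (l l' : list R) := Forall2 (fun x y => Rabs (x - y) < d) l l'.
Definition UC n (F : list R -> R) := UCg (incube n) close F.

Lemma close_mono : Cmono close.
Proof. unfold Cmono, close; intros. eapply Forall2_impl; [|eauto]. simpl; intros; lra. Qed.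

Lemma close_refl d l : 0 < d -> close d l l.
Proof. intros Hd; induction l; constructor; auto. replace (a - a) with 0 by ring; rewrite Rabs_R0; lra. Qed.

Lemma incube_cons n x l : 0 <= x <= 1 -> incube n l -> incube (S n) (x :: l).
Proof. intros Hx [H1 H2]; split; simpl; auto. Qed.

Lemma UC_sec n F x : UC (S n) F -> 0 <= x <= 1 -> UC n (fun l => F (x :: l)).
Proof.
  intros [[M HM] H] Hx. split.
  - exists M; intros l Hl; apply HM, incube_cons; auto.
  - intros e He; destruct (H e He) as [d [Hd H']]; exists d; split; auto.
    intros l l' Hl Hl' Hc; apply H'; try apply incube_cons; auto.
    constructor; auto. replace (x - x) with 0 by ring; rewrite Rabs_R0; lra.
Qed.

Lemma iint_const n c : iint n (fun _ => c) = c.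
Proof.
  induction n; simpl; auto.
  replace (fun x : R => iint n (fun _ : list R => c)) with (fun _ : R => c).
  - apply integral_const.
  - apply functional_extensionality; intros; rewrite IHn; auto.
Qed.

Lemma iint_ext n F G : (forall l, incube n l -> F l = G l) -> iint n F = iint n G.
Proof.
  revert F G; induction n; intros F G H; simpl.
  - apply H; split; simpl; auto.
  - apply integral_ext01; intros x Hx. apply IHn. intros l Hl; apply H, incube_cons; auto.
Qed.

Definition iprops n :=
  forall F, UC n F ->
   (forall c, iint n (fun l => c * F l) = c * iint n F) /\
   (forall G, UC n G -> iint n (fun l => F l + G l) = iint n F + iint n G) /\
   (forall G, UC n G -> (forall l, incube n l -> G l <= F l) -> iint n G <= iint n F).

Lemma phi_exRInt n F : iprops n -> UC (S n) F -> ex_RInt (fun x => iint n (fun l => F (x :: l))) 0 1.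
Proof.
  intros IH HF. apply unif_exRInt.
  intros e He. destruct HF as [HB HU]. destruct (HU e He) as [d [Hd H]].
  exists d; split; auto. intros x y Hx Hy Hxy.
  assert (key : forall x y, 0 <= x <= 1 -> 0 <= y <= 1 -> Rabs (x - y) < d ->
     iint n (fun l => F (x :: l)) <= iint n (fun l => F (y :: l)) + e).
  { clear x y Hx Hy Hxy. intros x y Hx Hy Hxy.
    assert (UCx : UC n (fun l => F (x :: l))) by (apply UC_sec; [split|]; auto).
    assert (UCy : UC n (fun l => F (y :: l))) by (apply UC_sec; [split|]; auto).
    destruct (IH _ UCy) as [_ [Hadd Hmono]].
    replace (iint n (fun l => F (y :: l)) + e) with (iint n (fun l => F (y :: l)) + iint n (fun _ => e)) by (rewrite iint_const; auto).
    rewrite <- Hadd by apply UCg_const.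
    assert (UCye : UC n (fun l => F (y :: l) + e)) by (apply UCg_add; [apply close_mono|auto|apply UCg_const]).
    destruct (IH _ UCye) as [_ [_ Hmono']].
    apply Hmono'; auto.
    intros l Hl. assert (Hc : close d (x :: l) (y :: l)) by (constructor; auto; apply close_refl; auto).
    specialize (H _ _ (incube_cons _ _ _ Hx Hl) (incube_cons _ _ _ Hy Hl) Hc).
    apply Rabs_le_between in H. lra. }
  apply Rabs_le_between. split.
  - assert (K := key y x Hy Hx). rewrite Rabs_minus_sym in K. specialize (K Hxy). lra.
  - assert (K := key x y Hx Hy Hxy). lra.
Qed.

Lemma iprops_all n : iprops n.
Proof.
  induction n.
  - intros F HF; simpl; repeat split; intros; auto. apply H0; split; simpl; auto.
  - intros F HF. assert (EF := phi_exRInt n F IHn HF). simpl. repeat split.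
    + intros c. rewrite <- integral_scal by auto. apply integral_ext01; intros x Hx.
      destruct (IHn _ (UC_sec _ _ _ HF Hx)) as [Hs _]. apply Hs.
    + intros G HG. assert (EG := phi_exRInt n G IHn HG).
      rewrite <- integral_plus by auto. apply integral_ext01; intros x Hx.
      destruct (IHn _ (UC_sec _ _ _ HF Hx)) as [_ [Ha _]]. apply Ha. apply UC_sec; auto.
    + intros G HG Hle. assert (EG := phi_exRInt n G IHn HG).
      apply integral_le; auto. intros x Hx.
      destruct (IHn _ (UC_sec _ _ _ HF Hx)) as [_ [_ Hm]]. apply Hm. apply UC_sec; auto.
      intros l Hl; apply Hle, incube_cons; auto.
Qed.

Lemma iint_scal n F c : UC n F -> iint n (fun l => c * F l) = c * iint n F.
Proof. intros H; apply (iprops_all n F H). Qed.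
Lemma iint_plus n F G : UC n F -> UC n G -> iint n (fun l => F l + G l) = iint n F + iint n G.
Proof. intros H; apply (iprops_all n F H). Qed.
Lemma iint_le n F G : UC n F -> UC n G -> (forall l, incube n l -> G l <= F l) -> iint n G <= iint n F.
Proof. intros H; apply (iprops_all n F H). Qed.

Fixpoint prl (g : nat -> R -> R) (n : nat) (l : list R) : R :=
  match n with O => 1 | S n' => g O (hd 0 l) * prl (fun i => g (S i)) n' (tl l) end.
Fixpoint nprodf (c : nat -> R) (n : nat) : R :=
  match n with O => 1 | S n' => c O * nprodf (fun i => c (S i)) n' end.

Lemma incube_S n l : incube (S n) l -> exists x t, l = x :: t /\ 0 <= x <= 1 /\ incube n t.
Proof.
  intros [H1 H2]. destruct l as [|x t]; simpl in H1; [discriminate|].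
  inversion H2; subst. exists x, t; repeat split; auto; lra.
Qed.

Lemma UC_hd n f : good f -> UC (S n) (fun l => f (hd 0 l)).
Proof.
  intros [[M HM] H]. split.
  - exists M; intros l Hl; destruct (incube_S _ _ Hl) as [x [t [-> [Hx _]]]]; apply HM; auto.
  - intros e He; destruct (H e He) as [d [Hd H']]; exists d; split; auto.
    intros l l' Hl Hl' Hc.
    destruct (incube_S _ _ Hl) as [x [t [-> [Hx _]]]].
    destruct (incube_S _ _ Hl') as [x' [t' [-> [Hx' _]]]].
    inversion Hc; subst. apply H'; auto.
Qed.

Lemma UC_tl n R0 : UC n R0 -> UC (S n) (fun l => R0 (tl l)).
Proof.
  intros [[M HM] H]. split.
  - exists M; intros l Hl; destruct (incube_S _ _ Hl) as [x [t [-> [Hx Ht]]]]; apply HM; auto.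
  - intros e He; destruct (H e He) as [d [Hd H']]; exists d; split; auto.
    intros l l' Hl Hl' Hc.
    destruct (incube_S _ _ Hl) as [x [t [-> [Hx Ht]]]].
    destruct (incube_S _ _ Hl') as [x' [t' [-> [Hx' Ht']]]].
    inversion Hc; subst. apply H'; auto.
Qed.

Lemma UC_prl n g : (forall i, good (g i)) -> UC n (prl g n).
Proof.
  revert g; induction n; intros g Hg; simpl.
  - apply UCg_const.
  - apply UCg_mul; [apply close_mono| apply UC_hd; auto |].
    apply (UC_tl n (prl (fun i => g (S i)) n)). apply IHn; auto.
Qed.

Lemma iint_prl n g : (forall i, good (g i)) -> iint n (prl g n) = nprodf (fun i => integral (g i) 0 1) n.
Proof.
  revert g; induction n; intros g Hg; simpl; auto.
  rewrite <- (IHn (fun i => g (S i))) by auto.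
  set (K := iint n (prl (fun i : nat => g (S i)) n)).
  transitivity (integral (fun x => K * g 0%nat x) 0 1).
  - apply integral_ext01; intros x Hx.
    rewrite (iint_scal n (prl (fun i => g (S i)) n) (g 0%nat x)) by (apply UC_prl; auto).
    unfold K; apply Rmult_comm.
  - rewrite integral_scal by (apply good_exRInt; auto). ring.
Qed.

Lemma prl_ext n g g' l : (forall i x, g i x = g' i x) -> prl g n l = prl g' n l.
Proof.
  revert g g' l; induction n; intros; simpl; auto. rewrite H. f_equal. apply IHn; auto.
Qed.

Lemma prl_mul n g g' l : prl g n l * prl g' n l = prl (fun i x => g i x * g' i x) n l.
Proof.
  revert g g' l; induction n; intros; simpl; [ring|].
  rewrite <- (IHn (fun i => g (S i)) (fun i => g' (S i))). ring.
Qed.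

Lemma nprodf_ext n c c' : (forall i, c i = c' i) -> nprodf c n = nprodf c' n.
Proof. revert c c'; induction n; intros; simpl; auto. rewrite H; f_equal; apply IHn; auto. Qed.

Lemma nprodf_one n c : (forall i, c i = 1) -> nprodf c n = 1.
Proof. revert c; induction n; intros; simpl; auto. rewrite H, IHn; auto; ring. Qed.

Lemma nprodf_block m A : forall lo n, (lo + m <= n)%nat ->
  nprodf (fun i => if andb (Nat.leb lo i) (Nat.ltb i (lo + m)) then A else 1) n = A ^ m.
Proof.
  intro lo; induction lo; intros n Hn.
  - revert n Hn; induction m; intros n Hn.
    + apply nprodf_one; intros i. destruct (Nat.ltb_spec i 0); [lia|]. rewrite Bool.andb_false_r; auto.
    + destruct n; [lia|]. simpl. rewrite <- (IHm n) by lia. f_equal.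
  - destruct n; [lia|]. simpl. rewrite Rmult_1_l, <- (IHlo n) by lia.
    apply nprodf_ext; intros i. reflexivity.
Qed.

Lemma prl_bounds n g l : (forall i x, 0 <= x <= 1 -> 0 <= g i x <= 1) -> incube n l ->
  0 <= prl g n l <= 1.
Proof.
  revert g l; induction n; intros g l Hg Hl; simpl; [lra|].
  destruct (incube_S _ _ Hl) as [x [t [-> [Hx Ht]]]]. simpl.
  assert (H0 := Hg 0%nat x Hx). specialize (IHn (fun i => g (S i)) t (fun i => Hg (S i)) Ht).
  split; [apply Rmult_le_pos; lra|]. rewrite <- (Rmult_1_r 1). apply Rmult_le_compat; lra.
Qed.

Lemma prl_nonneg n g l : (forall i x, 0 <= x <= 1 -> 0 <= g i x) -> incube n l -> 0 <= prl g n l.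
Proof.
  revert g l; induction n; intros g l Hg Hl; simpl; [lra|].
  destruct (incube_S _ _ Hl) as [x [t [-> [Hx Ht]]]]. simpl.
  apply Rmult_le_pos; auto.
Qed.

Lemma prl_all1 n g l : (forall i, (i < n)%nat -> g i (nth i l 0) = 1) -> prl g n l = 1.
Proof.
  revert g l; induction n; intros g l H; simpl; auto.
  rewrite IHn. rewrite Rmult_1_r. destruct l; apply (H 0%nat); lia.
  intros i Hi. rewrite <- (H (S i)) by lia. destruct l; simpl; auto. destruct i; auto.
Qed.

Lemma prl_fold n f l : incube n l -> fold_right Rmult 1 (map f l) = prl (fun _ => f) n l.
Proof.
  revert l; induction n; intros l Hl.
  - destruct Hl as [H _]; destruct l; simpl in *; [auto|discriminate].
  - destruct (incube_S _ _ Hl) as [x [t [-> [Hx Ht]]]]. simpl. rewrite IHn; auto.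
Qed.

Lemma subsets_len k l s : In s (subsets k l) -> List.length s = k.
Proof.
  revert k s; induction l; intros k s H; destruct k; simpl in H.
  - destruct H as [<-|[]]; auto.
  - destruct H.
  - destruct H as [<-|[]]; auto.
  - apply in_app_or in H. destruct H as [H|H].
    + apply in_map_iff in H. destruct H as [s' [<- Hs']]. simpl. f_equal. apply IHl; auto.
    + apply IHl; auto.
Qed.

Lemma subsets_in len : forall lo k s, StronglySorted lt s -> List.length s = k ->
  List.Forall (fun j => (lo <= j < lo + len)%nat) s -> In s (subsets k (seq lo len)).
Proof.
  induction len; intros lo k s Hs Hl Hf.
  - destruct s as [|x s]. { simpl in Hl; subst; simpl; auto. }
    inversion Hf; lia.
  - destruct k.
    + destruct s; simpl in Hl; [|discriminate]. simpl. auto.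
    + destruct s as [|x s]; simpl in Hl; [discriminate|]. injection Hl; intro Hl'.
      simpl. apply in_or_app.
      inversion Hs; subst. inversion Hf; subst.
      destruct (Nat.eq_dec x lo) as [->|Hne].
      * left. apply in_map. apply IHlen; auto.
        rewrite Forall_forall in *. intros j Hj. specialize (H2 j Hj). specialize (H4 j Hj). lia.
      * right. apply IHlen; auto. constructor; [lia|].
        rewrite Forall_forall in *. intros j Hj. specialize (H2 j Hj). specialize (H4 j Hj). lia.
Qed.

Lemma fold_max_ge a t y : In y (a :: t) -> y <= fold_right Rmax a t.
Proof.
  induction t; simpl; intros H.
  - destruct H as [<-|[]]; lra.
  - destruct H as [<-|[<-|H]].
    + eapply Rle_trans; [apply IHt; simpl; auto|apply Rmax_r].
    + apply Rmax_l.
    + eapply Rle_trans; [apply IHt; simpl; auto|apply Rmax_r].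
Qed.

Lemma lmax_ge L y : In y L -> y <= lmax L.
Proof. destruct L; simpl; [intros []|]. intros H; apply fold_max_ge; simpl; auto. Qed.

Lemma Rmax_lip a b c d e : Rabs (a - c) <= e -> Rabs (b - d) <= e -> Rabs (Rmax a b - Rmax c d) <= e.
Proof. intros H1 H2. apply Rabs_le_between in H1; apply Rabs_le_between in H2; apply Rabs_le_between.
  unfold Rmax; repeat destruct Rle_dec; lra. Qed.

Lemma lmax_lip {X} (f g : X -> R) S e : 0 <= e -> (forall s, In s S -> Rabs (f s - g s) <= e) ->
  Rabs (lmax (map f S) - lmax (map g S)) <= e.
Proof.
  intros He H. destruct S as [|x t]; simpl.
  - replace (0 - 0) with 0 by ring; rewrite Rabs_R0; auto.
  - assert (H0 : Rabs (f x - g x) <= e) by (apply H; simpl; auto).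
    assert (Ht : forall s, In s t -> Rabs (f s - g s) <= e) by (intros; apply H; simpl; auto).
    clear H. induction t; simpl; auto.
    apply Rmax_lip; [apply Ht; simpl; auto|]. apply IHt; intros; apply Ht; simpl; auto.
Qed.

Lemma lmax_bound {X} (f : X -> R) S M : 0 <= M -> (forall s, In s S -> Rabs (f s) <= M) ->
  Rabs (lmax (map f S)) <= M.
Proof.
  intros HM H. destruct S as [|x t]; simpl.
  - rewrite Rabs_R0; auto.
  - assert (H0 : Rabs (f x) <= M) by (apply H; simpl; auto).
    assert (Ht : forall s, In s t -> Rabs (f s) <= M) by (intros; apply H; simpl; auto).
    clear H. induction t; simpl; auto.
    assert (IH := IHt (fun s Hs => Ht s (or_intror Hs))). assert (Ha := Ht a (or_introl eq_refl)).
    apply Rabs_le_between in IH; apply Rabs_le_between in Ha; apply Rabs_le_between.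
    apply Rmax_case_strong; intros; lra.
Qed.

Lemma nth_close d l l' j : 0 <= d -> close d l l' -> Rabs (nth j l 0 - nth j l' 0) <= d.
Proof.
  intros Hd H. revert j; induction H; intros j; destruct j; simpl; auto; try lra.
  replace (0 - 0) with 0 by ring; rewrite Rabs_R0; auto.
  replace (0 - 0) with 0 by ring; rewrite Rabs_R0; auto.
Qed.

Lemma nth_cube n l j : incube n l -> 0 <= nth j l 0 <= 1.
Proof.
  intros [_ H]. revert j; induction H; intros j; destruct j; simpl; auto; lra.
Qed.

Definition sumL (P : list R) (s : list nat) := fold_right Rplus 0 (map (fun j => nth j P 0) s).

Lemma sumL_cons P a s : sumL P (a :: s) = nth a P 0 + sumL P s.
Proof. reflexivity. Qed.
Lemma sumL_nil P : sumL P nil = 0.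
Proof. reflexivity. Qed.

Lemma sumL_lip P P' s d : (forall j, Rabs (nth j P 0 - nth j P' 0) <= d) ->
  Rabs (sumL P s - sumL P' s) <= INR (List.length s) * d.
Proof.
  intros H. induction s.
  - rewrite !sumL_nil. simpl. replace (0 - 0) with 0 by ring; rewrite Rabs_R0; lra.
  - rewrite !sumL_cons.
    replace (nth a P 0 + sumL P s - (nth a P' 0 + sumL P' s)) with
      ((nth a P 0 - nth a P' 0) + (sumL P s - sumL P' s)) by ring.
    eapply Rle_trans; [apply Rabs_triang|]. simpl List.length. rewrite S_INR.
    specialize (H a). lra.
Qed.

Lemma sumL_bound n P s : incube n P -> Rabs (sumL P s) <= INR (List.length s).
Proof.
  intros H. induction s.
  - rewrite sumL_nil; simpl; rewrite Rabs_R0; lra.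
  - rewrite sumL_cons. simpl List.length. rewrite S_INR. eapply Rle_trans; [apply Rabs_triang|].
    assert (K := nth_cube n P a H). rewrite (Rabs_right (nth a P 0)) by lra. lra.
Qed.

Lemma UC_topk d k : (1 <= k)%nat -> UC d (topk_max d k).
Proof.
  intros Hk. unfold topk_max. split.
  - exists (INR k). intros l Hl. apply lmax_bound; [apply pos_INR|].
    intros s Hs. rewrite <- (subsets_len _ _ _ Hs). apply (sumL_bound d l s Hl).
  - intros e He. assert (Hk' : 0 < INR k) by (apply lt_0_INR; lia).
    exists (e / INR k). split; [apply Rdiv_lt_0_compat; auto|].
    intros l l' Hl Hl' Hc. apply lmax_lip; [lra|]. intros s Hs.
    replace e with (INR (List.length s) * (e / INR k)).
    + apply sumL_lip. intros j. apply nth_close; auto.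
      apply Rlt_le, Rdiv_lt_0_compat; auto.
    + rewrite (subsets_len _ _ _ Hs). field. lra.
Qed.

Definition inb (m b i : nat) : bool := andb (Nat.leb (b * m) i) (Nat.ltb i (b * m + m)).

Definition Pb (psi : R -> R) (m b d : nat) (l : list R) : R :=
  prl (fun i => if inb m b i then (fun x => 1 - psi x) else (fun _ => 1)) d l.

Definition Vb (psi1 psi2 : R -> R) (t1 t2 : R) (m d : nat) (l : list R) (b : nat) : R :=
  t1 * (1 - Pb psi1 m b d l) + (t2 - t1) * (1 - Pb psi2 m b d l).

Fixpoint sumr (f : nat -> R) (b0 c : nat) : R :=
  match c with O => 0 | S c' => f b0 + sumr f (S b0) c' end.

Definition psiok (psi : R -> R) (t : R) :=
  (forall x, 0 <= x <= 1 -> 0 <= psi x <= 1) /\ (forall x, x < t -> psi x = 0).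

Lemma Pb_bounds psi m b d l : psiok psi 0 \/ True -> (forall x, 0 <= x <= 1 -> 0 <= psi x <= 1) ->
  incube d l -> 0 <= Pb psi m b d l <= 1.
Proof.
  intros _ H Hl. apply prl_bounds; auto. intros i x Hx. destruct (inb m b i); [specialize (H x Hx)|]; lra.
Qed.

Lemma Pb_one psi t m b d l M : (forall x, x < t -> psi x = 0) ->
  (forall j, inb m b j = true -> nth j l 0 <= M) -> M < t -> Pb psi m b d l = 1.
Proof.
  intros H HM Mt. apply prl_all1. intros i Hi. destruct (inb m b i) eqn:E; auto.
  rewrite H; [ring|]. specialize (HM i E); lra.
Qed.

Lemma Vb_le psi1 psi2 t1 t2 m d l b i : 0 <= t1 <= t2 -> psiok psi1 t1 -> psiok psi2 t2 ->
  incube d l -> (forall j, inb m b j = true -> nth j l 0 <= nth i l 0) ->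
  Vb psi1 psi2 t1 t2 m d l b <= nth i l 0.
Proof.
  intros Ht [H1a H1b] [H2a H2b] Hl Hmax. unfold Vb.
  assert (K1 := Pb_bounds psi1 m b d l (or_intror I) H1a Hl).
  assert (K2 := Pb_bounds psi2 m b d l (or_intror I) H2a Hl).
  assert (HM := nth_cube d l i Hl).
  destruct (Rle_lt_dec t2 (nth i l 0)).
  - nra.
  - rewrite (Pb_one psi2 t2 m b d l (nth i l 0)); auto.
    destruct (Rle_lt_dec t1 (nth i l 0)).
    + nra.
    + rewrite (Pb_one psi1 t1 m b d l (nth i l 0)); auto. lra.
Qed.

Lemma argmax_ex (f : nat -> R) lo m : (1 <= m)%nat ->
  exists i, (lo <= i < lo + m)%nat /\ forall j, (lo <= j < lo + m)%nat -> f j <= f i.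
Proof.
  induction m; intros Hm; [lia|].
  destruct m.
  - exists lo; split; [lia|]. intros j Hj; assert (j = lo) by lia; subst; lra.
  - destruct IHm as [i [Hi Hmax]]; [lia|].
    destruct (Rle_lt_dec (f (lo + S m)%nat) (f i)).
    + exists i; split; [lia|]. intros j Hj. destruct (Nat.eq_dec j (lo + S m)) as [->|]; auto.
      apply Hmax; lia.
    + exists (lo + S m)%nat; split; [lia|]. intros j Hj. destruct (Nat.eq_dec j (lo + S m)) as [->|]; [lra|].
      specialize (Hmax j ltac:(lia)); lra.
Qed.

Lemma inb_spec m b j : inb m b j = true <-> (b * m <= j < b * m + m)%nat.
Proof.
  unfold inb. rewrite Bool.andb_true_iff, Nat.leb_le, Nat.ltb_lt. tauto.
Qed.

Lemma pick_blocks psi1 psi2 t1 t2 m d l : (1 <= m)%nat -> 0 <= t1 <= t2 -> psiok psi1 t1 -> psiok psi2 t2 ->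
  incube d l -> forall c b0, exists s, StronglySorted lt s /\ List.length s = c /\
    List.Forall (fun j => (b0 * m <= j < (b0 + c) * m)%nat) s /\
    sumr (Vb psi1 psi2 t1 t2 m d l) b0 c <= sumL l s.
Proof.
  intros Hm Ht H1 H2 Hl c. induction c; intros b0.
  - exists nil; repeat split; simpl; auto. constructor. rewrite sumL_nil; lra.
  - destruct (IHc (S b0)) as [s [Hs [Hlen [Hf Hsum]]]].
    destruct (argmax_ex (fun j => nth j l 0) (b0 * m) m Hm) as [i [Hi Hmax]].
    exists (i :: s). repeat split.
    + constructor; auto. rewrite Forall_forall in *. intros j Hj. specialize (Hf j Hj). simpl in Hf. lia.
    + simpl; auto.
    + constructor; [nia|]. rewrite Forall_forall in *. intros j Hj. specialize (Hf j Hj). simpl in Hf. nia.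
    + simpl sumr. rewrite sumL_cons.
      assert (Vb psi1 psi2 t1 t2 m d l b0 <= nth i l 0).
      { apply Vb_le; auto. intros j Hj. apply inb_spec in Hj. apply Hmax; lia. }
      lra.
Qed.

Lemma topk_ge psi1 psi2 t1 t2 m d k l : (1 <= m)%nat -> (k * m <= d)%nat -> 0 <= t1 <= t2 ->
  psiok psi1 t1 -> psiok psi2 t2 -> incube d l ->
  sumr (Vb psi1 psi2 t1 t2 m d l) 0 k <= topk_max d k l.
Proof.
  intros Hm Hkd Ht H1 H2 Hl.
  destruct (pick_blocks psi1 psi2 t1 t2 m d l Hm Ht H1 H2 Hl k 0) as [s [Hs [Hlen [Hf Hsum]]]].
  eapply Rle_trans; [apply Hsum|]. unfold topk_max. apply lmax_ge.
  change (fun s0 : list nat => fold_right Rplus 0 (map (fun j : nat => nth j l 0) s0)) with (sumL l).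
  apply in_map. apply subsets_in; auto.
  rewrite Forall_forall in *. intros j Hj. specialize (Hf j Hj). simpl in Hf. lia.
Qed.

Lemma Rpower_pos x a : 0 < Rpower x a.
Proof. unfold Rpower; apply exp_pos. Qed.

Lemma rpow_pos x a : 0 < x -> rpow x a = Rpower x a.
Proof. intros H; unfold rpow; destruct (Req_EM_T x 0); [lra|auto]. Qed.

Lemma rpow_0a a : 0 < a -> rpow 0 a = 0.
Proof. intros H; unfold rpow; destruct (Req_EM_T 0 0); [|lra]. destruct (Req_EM_T a 0); [lra|auto]. Qed.

Lemma rpow_x0 x : rpow x 0 = 1.
Proof. unfold rpow; destruct (Req_EM_T x 0); [destruct (Req_EM_T 0 0); lra|].
  unfold Rpower. rewrite Rmult_0_l. apply exp_0. Qed.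

Lemma rpow_nonneg x a : 0 <= rpow x a.
Proof. unfold rpow; destruct (Req_EM_T x 0); [destruct (Req_EM_T a 0); lra|].
  left; apply Rpower_pos. Qed.

Lemma cont_unfold f x : (forall eps, 0 < eps -> exists del, 0 < del /\
   forall z, Rabs (z - x) < del -> Rabs (f z - f x) < eps) -> continuity_pt f x.
Proof.
  intros H. unfold continuity_pt, continue_in, limit1_in, limit_in; simpl; unfold R_dist.
  intros eps He. destruct (H eps He) as [d [Hd H']]. exists d; split; auto.
  intros z [_ Hz]; auto.
Qed.

Lemma cont_use f x : continuity_pt f x -> forall eps, 0 < eps -> exists del, 0 < del /\
   forall z, Rabs (z - x) < del -> Rabs (f z - f x) < eps.
Proof.
  intros H eps He. unfold continuity_pt, continue_in, limit1_in, limit_in in H; simpl in H; unfold R_dist in H.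
  destruct (H eps He) as [d [Hd H']]. exists d; split; auto.
  intros z Hz. destruct (Req_dec x z) as [->|Hne].
  - replace (f z - f z) with 0 by ring; rewrite Rabs_R0; auto.
  - apply H'; split; auto. split; auto. exact I.
Qed.

Lemma cont_lip f x : (forall y z, Rabs (f y - f z) <= Rabs (y - z)) -> continuity_pt f x.
Proof.
  intros H; apply cont_unfold; intros eps He; exists eps; split; auto.
  intros z Hz; eapply Rle_lt_trans; [apply H|auto].
Qed.

Lemma cont_G a y : 0 <= a -> continuity_pt (fun z => rpow (clamp z) a) y.
Proof.
  intros Ha. destruct (Req_dec a 0) as [->|Ha'].
  { apply continuity_pt_const. intros u v. rewrite !rpow_x0; auto. }
  assert (Hap : 0 < a) by lra.
  apply cont_unfold; intros eps He.
  destruct (clamp_in y) as [Hc0 Hc1].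
  destruct (Req_dec (clamp y) 0) as [Hc|Hc].
  - exists (Rpower (eps/2) (/ a)). split; [apply Rpower_pos|].
    intros z Hz. rewrite Hc, rpow_0a by auto.
    assert (Hcz : clamp z < Rpower (eps/2) (/a)).
    { assert (K := clamp_lip z y). rewrite Hc in K. rewrite Rminus_0_r in K.
      rewrite Rabs_right in K by (apply Rle_ge, clamp_in). lra. }
    destruct (Req_dec (clamp z) 0) as [Hz0|Hz0].
    + rewrite Hz0, rpow_0a by auto. replace (0 - 0) with 0 by ring; rewrite Rabs_R0; auto.
    + assert (Hzp : 0 < clamp z) by (generalize (clamp_in z); lra).
      rewrite rpow_pos by auto. rewrite Rminus_0_r. rewrite Rabs_right by (left; apply Rpower_pos).
      apply Rle_lt_trans with (Rpower (Rpower (eps/2) (/a)) a).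
      * apply Rle_Rpower_l; lra.
      * rewrite Rpower_mult. rewrite Rinv_l by lra. rewrite Rpower_1 by lra. lra.
  - assert (Hcp : 0 < clamp y) by lra.
    assert (Hd : continuity_pt (fun u => Rpower u a) (clamp y)).
    { apply derivable_continuous_pt. exists (a * Rpower (clamp y) (a - 1)). apply derivable_pt_lim_power; auto. }
    destruct (cont_use _ _ Hd eps He) as [d1 [Hd1 H1]].
    exists (Rmin d1 (clamp y)); split; [apply Rmin_pos; auto|].
    intros z Hz. assert (K := clamp_lip z y).
    assert (Hzp : 0 < clamp z).
    { assert (Rabs (clamp z - clamp y) < clamp y) by (generalize (Rmin_r d1 (clamp y)); lra).
      apply Rabs_le_between in K. split_Rabs; lra. }
    rewrite !rpow_pos by auto. apply H1. generalize (Rmin_l d1 (clamp y)); lra.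
Qed.

Definition hfun (a x : R) := rpow x a * rpow (1 - x) a.

Lemma cont_h a y : 0 <= a -> continuity_pt (fun z => hfun a (clamp z)) y.
Proof.
  intros Ha. unfold hfun.
  assert (E : (fun z => rpow (clamp z) a * rpow (1 - clamp z) a) =
     mult_fct (fun z => rpow (clamp z) a) (comp (fun z => rpow (clamp z) a) (fun z => 1 - clamp z))).
  { apply FunctionalExtensionality.functional_extensionality; intros z. unfold comp, mult_fct.
    f_equal. rewrite (clamp_id (1 - clamp z)); [reflexivity|generalize (clamp_in z); lra]. }
  rewrite E. apply continuity_pt_mult; [apply cont_G; auto|].
  apply continuity_pt_comp; [|apply cont_G; auto].
  apply cont_lip. intros u v. generalize (clamp_lip u v). intros K.
  replace (1 - clamp u - (1 - clamp v)) with (- (clamp u - clamp v)) by ring. rewrite Rabs_Ropp; auto.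
Qed.

Lemma h_bounds a x : 0 <= a -> 0 <= x <= 1 -> 0 <= hfun a x <= Rpower (/4) a.
Proof.
  intros Ha Hx. unfold hfun. split; [apply Rmult_le_pos; apply rpow_nonneg|].
  destruct (Req_dec a 0) as [->|Ha'].
  { rewrite !rpow_x0. unfold Rpower. rewrite Rmult_0_l, exp_0. lra. }
  destruct (Req_dec x 0) as [->|Hx0].
  { rewrite rpow_0a by lra. rewrite Rmult_0_l. left; apply Rpower_pos. }
  destruct (Req_dec x 1) as [->|Hx1].
  { replace (1 - 1) with 0 by ring. rewrite rpow_0a by lra. rewrite Rmult_0_r. left; apply Rpower_pos. }
  assert (0 < x < 1) by (destruct Hx as [[?|?] [?|?]]; subst; try lra; exfalso; auto).
  rewrite !rpow_pos by lra. rewrite Rpower_mult_distr by lra.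
  apply Rle_Rpower_l; [lra|]. split; [nra|]. pose proof (Rle_0_sqr (x - /2)); unfold Rsqr in *; nra.
Qed.

Lemma h_lower a x v : 0 <= a -> /2 <= x <= v -> v < 1 -> Rpower (v * (1 - v)) a <= hfun a x.
Proof.
  intros Ha Hx Hv. unfold hfun. rewrite !rpow_pos by lra. rewrite Rpower_mult_distr by lra.
  apply Rle_Rpower_l; [lra|]. split; nra.
Qed.

Lemma Rpower_le1 a : 0 <= a -> Rpower (/4) a <= 1.
Proof.
  intros Ha. unfold Rpower. rewrite <- exp_0. destruct Ha as [Ha| <-].
  - left. apply exp_increasing. assert (ln (/4) < 0) by (rewrite <- ln_1; apply ln_increasing; lra). nra.
  - rewrite Rmult_0_l. lra.
Qed.

Lemma good_of_cont f M : (forall y, continuity_pt (fun z => f (clamp z)) y) ->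
  (forall x, 0 <= x <= 1 -> Rabs (f x) <= M) -> good f.
Proof.
  intros Hc HM. split; [exists M; auto|].
  intros eps He.
  assert (Hu := Heine (fun z => f (clamp z)) (fun c => 0 <= c <= 1) (compact_P3 0 1) (fun x _ => Hc x)).
  destruct (Hu (mkposreal eps He)) as [[d Hd] H]. exists d; split; auto.
  intros x y Hx Hy Hxy. simpl in H. specialize (H x y Hx Hy Hxy).
  rewrite !clamp_id in H by auto. lra.
Qed.

Lemma good_h a : 0 <= a -> good (hfun a).
Proof.
  intros Ha. apply good_of_cont with 1.
  - intros y; apply cont_h; auto.
  - intros x Hx. destruct (h_bounds a x Ha Hx). rewrite Rabs_right by lra.
    generalize (Rpower_le1 a Ha); lra.
Qed.

Lemma RInt_sub_le f u v : ex_RInt f 0 1 -> (forall x, 0 <= x <= 1 -> 0 <= f x) -> 0 <= u <= v -> v <= 1 ->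
  RInt f u v <= RInt f 0 1.
Proof.
  intros He Hp Huv Hv.
  assert (E0u : ex_RInt f 0 u) by (apply (ex_RInt_Chasles_1 f 0 u 1); auto; lra).
  assert (Eu1 : ex_RInt f u 1) by (apply (ex_RInt_Chasles_2 f 0 u 1); auto; lra).
  assert (Euv : ex_RInt f u v) by (apply (ex_RInt_Chasles_1 f u v 1); auto; lra).
  assert (Ev1 : ex_RInt f v 1) by (apply (ex_RInt_Chasles_2 f u v 1); auto; lra).
  assert (C1 : RInt f 0 u + RInt f u 1 = RInt f 0 1) by (apply (RInt_Chasles f 0 u 1); auto).
  assert (C2 : RInt f u v + RInt f v 1 = RInt f u 1) by (apply (RInt_Chasles f u v 1); auto).
  assert (P1 : 0 <= RInt f 0 u) by (apply RInt_ge_0; try lra; auto; intros; apply Hp; lra).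
  assert (P2 : 0 <= RInt f v 1) by (apply RInt_ge_0; try lra; auto; intros; apply Hp; lra).
  lra.
Qed.

Lemma RInt_lower f u v c : ex_RInt f 0 1 -> 0 <= u <= v -> v <= 1 ->
  (forall x, u <= x <= v -> c <= f x) -> c * (v - u) <= RInt f u v.
Proof.
  intros He Huv Hv H.
  assert (Euv : ex_RInt f u v).
  { apply (ex_RInt_Chasles_1 f u v 1); [lra|]. apply (ex_RInt_Chasles_2 f 0 u 1); auto; lra. }
  assert (K : RInt (fun _ => c) u v <= RInt f u v).
  { apply RInt_le; auto; [lra|apply ex_RInt_const|]. intros; apply H; lra. }
  rewrite RInt_const in K. unfold scal in K; simpl in K; unfold mult in K; simpl in K. lra.
Qed.

Definition psi (t eta x : R) := clamp ((x - t) / eta).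

Lemma psi_lip t eta x y : 0 < eta -> Rabs (psi t eta x - psi t eta y) <= Rabs (x - y) / eta.
Proof.
  intros He. unfold psi. eapply Rle_trans; [apply clamp_lip|].
  replace ((x - t) / eta - (y - t) / eta) with ((x - y) / eta) by (field; lra).
  unfold Rdiv; rewrite Rabs_mult, (Rabs_right (/ eta)); [lra|]. left; apply Rinv_0_lt_compat; auto.
Qed.

Lemma good_psi t eta : 0 < eta -> good (psi t eta).
Proof.
  intros He. split.
  - exists 1. intros x _. unfold psi. destruct (clamp_in ((x - t) / eta)). rewrite Rabs_right; lra.
  - intros e Hep. exists (e * eta); split; [nra|].
    intros x y _ _ Hxy. unfold C1 in Hxy. eapply Rle_trans; [apply psi_lip; auto|].
    apply Rmult_le_reg_r with eta; auto. unfold Rdiv; rewrite Rmult_assoc, Rinv_l by lra. lra.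
Qed.

Lemma psi_zero t eta x : 0 < eta -> x < t -> psi t eta x = 0.
Proof.
  intros He H. unfold psi, clamp. assert ((x - t) / eta < 0).
  { unfold Rdiv; apply Rmult_neg_pos; [lra|apply Rinv_0_lt_compat; auto]. }
  unfold Rmax, Rmin; repeat destruct Rle_dec; lra.
Qed.

Lemma psi_one t eta x : 0 < eta -> t + eta <= x -> psi t eta x = 1.
Proof.
  intros He H. unfold psi, clamp. assert (1 <= (x - t) / eta).
  { apply Rmult_le_reg_r with eta; auto. unfold Rdiv; rewrite Rmult_assoc, Rinv_l by lra. lra. }
  unfold Rmax, Rmin; repeat destruct Rle_dec; lra.
Qed.

Lemma psi_range t eta x : 0 <= psi t eta x <= 1.
Proof. apply clamp_in. Qed.

Lemma sumr_mul f b0 c x : sumr f b0 c * x = sumr (fun b => f b * x) b0 c.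
Proof. revert b0; induction c; intros; simpl; [ring|]. rewrite <- IHc. ring. Qed.

Lemma sumr_ext f g b0 c : (forall b, f b = g b) -> sumr f b0 c = sumr g b0 c.
Proof. revert b0; induction c; intros; simpl; auto. rewrite H, IHc; auto. Qed.

Lemma sumr_const f b0 c X : (forall b, (b0 <= b < b0 + c)%nat -> f b = X) -> sumr f b0 c = INR c * X.
Proof.
  revert b0; induction c; intros b0 H; simpl sumr; [simpl; ring|].
  rewrite (IHc (S b0)) by (intros; apply H; lia). rewrite H by lia. rewrite S_INR; ring.
Qed.

Lemma UC_sumr n W b0 c : (forall b, UC n (W b)) -> UC n (fun l => sumr (fun b => W b l) b0 c).
Proof.
  revert b0; induction c; intros b0 H; simpl.
  - apply UCg_const.
  - apply UCg_add; [apply close_mono|apply H|apply IHc; auto].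
Qed.

Lemma iint_sumr n W b0 c : (forall b, UC n (W b)) ->
  iint n (fun l => sumr (fun b => W b l) b0 c) = sumr (fun b => iint n (W b)) b0 c.
Proof.
  revert b0; induction c; intros b0 H; simpl.
  - apply iint_const.
  - rewrite (iint_plus n (W b0) (fun l => sumr (fun b => W b l) (S b0) c)); auto.
    + rewrite IHc; auto.
    + apply UC_sumr; auto.
Qed.

Lemma exp_pow_INR x n : exp x ^ n = exp (INR n * x).
Proof. induction n; simpl pow; [simpl; rewrite Rmult_0_l, exp_0; auto|]. rewrite S_INR, IHn.
  rewrite <- exp_plus. f_equal; ring. Qed.

Lemma exp_le_mono x y : x <= y -> exp x <= exp y.
Proof. intros [H| ->]; [left; apply exp_increasing; auto|lra]. Qed.

Lemma exp_lb x n : 0 <= x -> (0 < n)%nat -> (1 + x / INR n) ^ n <= exp x.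
Proof.
  intros Hx Hn. assert (HnR : 0 < INR n) by (apply lt_0_INR; auto).
  replace (exp x) with (exp (x / INR n) ^ n).
  - apply pow_incr. split.
    + assert (0 <= x / INR n) by (apply Rdiv_le_0_compat; lra). lra.
    + destruct (Req_dec x 0) as [->|Hne].
      * unfold Rdiv; rewrite Rmult_0_l, exp_0; lra.
      * left; apply exp_ineq1. intro H. apply Hne. apply Rmult_eq_reg_r with (/ INR n).
        unfold Rdiv in H; rewrite H; ring. apply Rinv_neq_0_compat; lra.
  - rewrite exp_pow_INR. f_equal. field. lra.
Qed.

Lemma one_minus_le_exp q : 1 - q <= exp (- q).
Proof.
  destruct (Req_dec q 0) as [->|Hne].
  - rewrite Ropp_0, exp_0; lra.
  - left. assert (K := exp_ineq1 (- q)). lra.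
Qed.

Lemma pow_one_minus q m : 0 <= 1 - q -> (1 - q) ^ m <= exp (- (INR m * q)).
Proof.
  intros H. eapply Rle_trans.
  - apply pow_incr. split; [exact H|apply one_minus_le_exp].
  - rewrite exp_pow_INR. right; f_equal; ring.
Qed.

Lemma exp2_lb : 59/10 <= exp 2.
Proof.
  assert (K := exp_lb 2 8 ltac:(lra) ltac:(lia)).
  replace (INR 8) with 8 in K by (simpl; ring). simpl in K. lra.
Qed.

Lemma ln019 : -2 <= ln (19/100 * 1).
Proof.
  rewrite <- (ln_exp (-2)). apply ln_le; [apply exp_pos|].
  assert (exp (-2) * exp 2 = 1) by (rewrite <- exp_plus; replace (-2 + 2) with 0 by ring; apply exp_0).
  assert (K := exp2_lb). assert (0 < exp (-2)) by apply exp_pos. nra.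
Qed.


Lemma B_def beta : beta_fn beta = integral (hfun (beta - 1)) 0 1.
Proof. reflexivity. Qed.

Lemma B_eq beta : 1 <= beta -> beta_fn beta = RInt (hfun (beta - 1)) 0 1.
Proof.
  intros Hb. rewrite B_def, integral_RInt; [reflexivity|].
  apply good_exRInt, good_h. lra.
Qed.

Lemma B_bounds beta : 1 <= beta ->
  0 < beta_fn beta /\ beta_fn beta <= Rpower (/4) (beta - 1).
Proof.
  intros Hb. assert (Ha : 0 <= beta - 1) by lra.
  assert (E := good_exRInt _ (good_h _ Ha)).
  rewrite B_eq by auto. split.
  - eapply Rlt_le_trans; [|apply (RInt_sub_le _ (/2) (95/100)); auto; try lra].
    2: { intros x Hx; apply h_bounds; auto. }
    eapply Rlt_le_trans; [|apply (RInt_lower _ _ _ (Rpower (95/100 * (1 - 95/100)) (beta - 1))); auto; try lra].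
    + assert (K := Rpower_pos (95/100 * (1 - 95/100)) (beta - 1)). nra.
    + intros x Hx; apply h_lower; auto; lra.
  - assert (K : RInt (hfun (beta - 1)) 0 1 <= RInt (fun _ => Rpower (/4) (beta - 1)) 0 1).
    { apply RInt_le; auto; [lra|apply ex_RInt_const|]. intros x Hx; apply h_bounds; auto; lra. }
    rewrite RInt_const in K. unfold scal in K; simpl in K; unfold mult in K; simpl in K. lra.
Qed.

Lemma rho_eq beta x : beta_density beta x = / beta_fn beta * hfun (beta - 1) x.
Proof. unfold beta_density, hfun, Rdiv. ring. Qed.

Lemma good_rho beta : 1 <= beta -> good (beta_density beta).
Proof.
  intros Hb. apply UCg_ext with (fun x => / beta_fn beta * hfun (beta - 1) x).
  { intros; rewrite rho_eq; auto. }
  apply UCg_scal; [apply C1_mono|]. apply good_h; lra.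
Qed.

Lemma rho_nonneg beta x : 1 <= beta -> 0 <= x <= 1 -> 0 <= beta_density beta x.
Proof.
  intros Hb Hx. rewrite rho_eq. destruct (B_bounds beta Hb).
  apply Rmult_le_pos; [left; apply Rinv_0_lt_compat; auto|]. apply h_bounds; auto; lra.
Qed.

Lemma int_rho beta : 1 <= beta -> integral (beta_density beta) 0 1 = 1.
Proof.
  intros Hb. destruct (B_bounds beta Hb) as [Bp _].
  rewrite (integral_ext01 _ (fun x => / beta_fn beta * hfun (beta - 1) x)) by (intros; apply rho_eq).
  rewrite integral_scal by (apply good_exRInt, good_h; lra).
  rewrite <- B_def. field. lra.
Qed.

Lemma ratio_lb a : 0 <= a -> Rpower (/4) a <= Rpower (95/100 * (1 - 95/100)) a * exp (2 * a).
Proof.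
  intros Ha. unfold Rpower. rewrite <- exp_plus. apply exp_le_mono.
  assert (E : ln (95 / 100 * (1 - 95 / 100)) = ln (19/100 * 1) + ln (/4)).
  { rewrite <- ln_mult by lra. f_equal. field. }
  rewrite E. assert (K := ln019). nra.
Qed.

Lemma q_facts beta t eta : 1 <= beta -> 0 < eta -> /2 <= t + eta <= 95/100 ->
  good (fun x => (1 - psi t eta x) * beta_density beta x) /\
  exists q, integral (fun x => (1 - psi t eta x) * beta_density beta x) 0 1 = 1 - q /\
    0 <= 1 - q /\ 95/100 - (t + eta) <= q * exp (2 * (beta - 1)).
Proof.
  intros Hb He Ht. assert (Ha : 0 <= beta - 1) by lra.
  assert (Gr := good_rho beta Hb). assert (Gp := good_psi t eta He).
  assert (Gpr : good (fun x => psi t eta x * beta_density beta x)) by (apply UCg_mul; auto; apply C1_mono).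
  assert (G1 : good (fun x => (1 - psi t eta x) * beta_density beta x)).
  { apply UCg_mul; auto; [apply C1_mono|]. apply UCg_sub; auto; [apply C1_mono|apply UCg_const]. }
  split; auto.
  exists (integral (fun x => psi t eta x * beta_density beta x) 0 1). split; [|split].
  - rewrite (integral_ext01 _ (fun x => beta_density beta x + (-1) * (psi t eta x * beta_density beta x)))
      by (intros; ring).
    rewrite integral_plus, integral_scal, int_rho; auto; try ring; apply good_exRInt; auto.
    apply UCg_scal; auto; apply C1_mono.
  - replace (1 - integral (fun x => psi t eta x * beta_density beta x) 0 1) with
      (integral (fun x => (1 - psi t eta x) * beta_density beta x) 0 1).
    + apply Rle_trans with (integral (fun _ => 0) 0 1); [rewrite integral_const; lra|]. apply integral_le; [apply ex_RInt_const|apply good_exRInt; auto|].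
      intros x Hx. apply Rmult_le_pos; [generalize (psi_range t eta x); lra|apply rho_nonneg; auto].
    + rewrite (integral_ext01 _ (fun x => beta_density beta x + (-1) * (psi t eta x * beta_density beta x)))
        by (intros; ring).
      rewrite integral_plus, integral_scal, int_rho; auto; try ring; apply good_exRInt; auto.
      apply UCg_scal; auto; apply C1_mono.
  - destruct (B_bounds beta Hb) as [Bp Bu].
    set (c := Rpower (95 / 100 * (1 - 95 / 100)) (beta - 1)).
    assert (Hq : (/ beta_fn beta * c) * (95/100 - (t + eta)) <= integral (fun x => psi t eta x * beta_density beta x) 0 1).
    { rewrite integral_RInt by (apply good_exRInt; auto).
      eapply Rle_trans; [|apply (RInt_sub_le _ (t + eta) (95/100)); auto; try lra].
      - apply RInt_lower; auto; try lra. apply good_exRInt; auto.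
        intros x Hx. rewrite psi_one by lra. rewrite Rmult_1_l, rho_eq.
        apply Rmult_le_compat_l; [left; apply Rinv_0_lt_compat; auto|]. apply h_lower; auto; lra.
      - apply good_exRInt; auto.
      - intros x Hx. apply Rmult_le_pos; [apply psi_range|apply rho_nonneg; auto]. }
    assert (Hr := ratio_lb (beta - 1) Ha). fold c in Hr.
    assert (Hc : 0 < c) by apply Rpower_pos.
    assert (H1 : 1 <= / beta_fn beta * c * exp (2 * (beta - 1))).
    { apply Rmult_le_reg_l with (beta_fn beta); auto.
      replace (beta_fn beta * (/ beta_fn beta * c * exp (2 * (beta - 1)))) with (c * exp (2 * (beta - 1)))
        by (field; lra). lra. }
    assert (Hpos : 0 <= 95/100 - (t + eta)) by lra.
    assert (He2 : 0 < exp (2 * (beta - 1))) by apply exp_pos.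
    nra.
Qed.

Lemma exp_neg_ub x : 0 <= x -> exp (- x) * ((1 + x / INR 8) ^ 8) <= 1.
Proof.
  intros Hx. assert (K := exp_lb x 8 Hx ltac:(lia)).
  assert (E : exp (- x) * exp x = 1) by (rewrite <- exp_plus; replace (-x + x) with 0 by ring; apply exp_0).
  assert (P : 0 < exp (- x)) by apply exp_pos.
  assert (P2 : 0 <= (1 + x / INR 8) ^ 8) by (apply pow_le; assert (0 <= x / INR 8) by (apply Rdiv_le_0_compat; [lra|apply lt_0_INR; lia]); lra).
  nra.
Qed.

Definition blk (rho psi0 : R -> R) (m b : nat) (i : nat) : R -> R :=
  if inb m b i then (fun x => (1 - psi0 x) * rho x) else rho.

Lemma Pb_prl rho psi0 m b d l : Pb psi0 m b d l * prl (fun _ => rho) d l = prl (blk rho psi0 m b) d l.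
Proof.
  unfold Pb. rewrite prl_mul. apply prl_ext. intros i x. unfold blk. destruct (inb m b i); ring.
Qed.

Lemma iint_blk beta psi0 m b d q : 1 <= beta -> good (fun x => (1 - psi0 x) * beta_density beta x) ->
  integral (fun x => (1 - psi0 x) * beta_density beta x) 0 1 = 1 - q ->
  (b * m + m <= d)%nat ->
  iint d (prl (blk (beta_density beta) psi0 m b) d) = (1 - q) ^ m.
Proof.
  intros Hb G1 Hq Hd. rewrite iint_prl.
  - rewrite <- (nprodf_block m (1 - q) (b * m) d Hd). apply nprodf_ext. intros i.
    unfold blk. fold (inb m b i). destruct (inb m b i); auto. apply int_rho; auto.
  - intros i; unfold blk; destruct (inb m b i); auto. apply good_rho; auto.
Qed.

Lemma UC_blk beta psi0 m b d : 1 <= beta -> good (fun x => (1 - psi0 x) * beta_density beta x) ->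
  UC d (prl (blk (beta_density beta) psi0 m b) d).
Proof.
  intros Hb G1. apply UC_prl. intros i; unfold blk; destruct (inb m b i); auto. apply good_rho; auto.
Qed.

Ltac uc := repeat (first [assumption | apply close_mono | apply UCg_add | apply UCg_scal | apply UCg_const]).

Theorem proposition2p2 (beta : R) (d k : nat) :
  0 < beta ->
  (1 <= k)%nat ->
  0 < INR d / (8 * Rmax (2 * INR k) 28) ->
  1 <= beta ->
  beta <= 1 + / 2 * ln (INR d / (8 * Rmax (2 * INR k) 28)) ->
  E_beta beta d (topk_max d k) >= 3 / 4 * INR k.
Proof.
  intros _ Hk HD Hb Hbeta.
  set (Dq := INR d / (8 * Rmax (2 * INR k) 28)) in *.
  set (e := exp (2 * (beta - 1))).
  assert (He1 : 1 <= e) by (unfold e; apply Rle_trans with (exp 0); [rewrite exp_0; lra|apply exp_le_mono; lra]).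
  assert (HeD : e <= Dq) by (unfold e; rewrite <- (exp_ln Dq HD); apply exp_le_mono; lra).
  assert (HkR : 1 <= INR k) by (apply (le_INR 1); auto).
  assert (Hmx : 2 * INR k <= Rmax (2 * INR k) 28) by apply Rmax_l.
  assert (Hd16 : 16 * INR k * e <= INR d).
  { unfold Dq in HeD. apply Rmult_le_compat_r with (r := 8 * Rmax (2 * INR k) 28) in HeD; [|lra].
    replace (INR d / (8 * Rmax (2 * INR k) 28) * (8 * Rmax (2 * INR k) 28)) with (INR d) in HeD by (field; lra).
    nra. }
  set (m := (d / k)%nat).
  assert (Hkm : (k * m <= d)%nat) by (apply Nat.mul_div_le; lia).
  assert (Hdm : INR d < INR k * (INR m + 1)).
  { assert (Hdiv := Nat.div_mod d k ltac:(lia)). assert (Hmod := Nat.mod_upper_bound d k ltac:(lia)).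
    fold m in Hdiv. assert (d < k * (m + 1))%nat by lia.
    replace (INR m + 1) with (INR (m + 1)) by (rewrite plus_INR; simpl; ring).
    rewrite <- mult_INR. apply lt_INR; auto. }
  assert (Hm15 : 15 * e <= INR m) by nra.
  assert (Hm1 : (1 <= m)%nat).
  { destruct m; [simpl in Hm15; lra|lia]. }
  set (eta := 1/100). set (t1 := 65/100). set (t2 := 84/100).
  set (rho := beta_density beta).
  set (psi1 := psi t1 eta). set (psi2 := psi t2 eta).
  destruct (q_facts beta t1 eta Hb ltac:(unfold eta; lra) ltac:(unfold t1, eta; lra)) as [G1 [q1 [Hq1 [Hq1p Hq1l]]]].
  destruct (q_facts beta t2 eta Hb ltac:(unfold eta; lra) ltac:(unfold t2, eta; lra)) as [G2 [q2 [Hq2 [Hq2p Hq2l]]]].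
  fold psi1 rho in G1, Hq1. fold psi2 rho in G2, Hq2.
  assert (ok1 : psiok psi1 t1).
  { split; [intros; apply psi_range|intros; apply psi_zero; unfold eta; lra]. }
  assert (ok2 : psiok psi2 t2).
  { split; [intros; apply psi_range|intros; apply psi_zero; unfold eta; lra]. }
  assert (Grho : good rho) by (apply good_rho; auto).
  set (W := fun b l => t1 * (prl (fun _ => rho) d l + (-1) * prl (blk rho psi1 m b) d l) +
                       (t2 - t1) * (prl (fun _ => rho) d l + (-1) * prl (blk rho psi2 m b) d l)).
  assert (UCW : forall b, UC d (W b)).
  { intros b. unfold W. assert (Cm := close_mono).
    assert (U0 : UC d (prl (fun _ => rho) d)) by (apply UC_prl; auto).
    apply UCg_add; auto; apply UCg_scal; auto; apply UCg_add; auto; apply UCg_scal; auto;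
      apply UC_blk; auto. }
  assert (Hprl1 : iint d (prl (fun _ => rho) d) = 1).
  { rewrite iint_prl by auto. apply nprodf_one. intros; apply int_rho; auto. }
  set (X := t1 * (1 + (-1) * (1 - q1) ^ m) + (t2 - t1) * (1 + (-1) * (1 - q2) ^ m)).
  assert (HW : forall b, (0 <= b < 0 + k)%nat -> iint d (W b) = X).
  { intros b Hbk. assert (Hbd : (b * m + m <= d)%nat) by nia.
    assert (U0 : UC d (prl (fun _ => rho) d)) by (apply UC_prl; auto).
    assert (Cm := close_mono).
    assert (UB1 : UC d (prl (blk rho psi1 m b) d)) by (apply UC_blk; auto).
    assert (UB2 : UC d (prl (blk rho psi2 m b) d)) by (apply UC_blk; auto).
    unfold W.
    rewrite !iint_plus by uc. rewrite !iint_scal by uc. rewrite !iint_plus by uc. rewrite !iint_scal by uc.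
    rewrite Hprl1. unfold rho.
    rewrite (iint_blk beta psi1 m b d q1), (iint_blk beta psi2 m b d q2); auto. }
  assert (HX : 3/4 <= X).
  { assert (A1 : (1 - q1) ^ m <= exp (- (15 * (95/100 - (t1 + eta))))).
    { eapply Rle_trans; [apply pow_one_minus; auto|]. apply exp_le_mono.
      assert (0 <= q1) by (assert (0 < e) by lra; fold e in Hq1l; unfold t1, eta in *; nra).
      fold e in Hq1l. nra. }
    assert (A2 : (1 - q2) ^ m <= exp (- (15 * (95/100 - (t2 + eta))))).
    { eapply Rle_trans; [apply pow_one_minus; auto|]. apply exp_le_mono.
      assert (0 <= q2) by (assert (0 < e) by lra; fold e in Hq2l; unfold t2, eta in *; nra).
      fold e in Hq2l. nra. }
    assert (B1 := exp_neg_ub (15 * (95/100 - (t1 + eta))) ltac:(unfold t1, eta; lra)).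
    assert (B2 := exp_neg_ub (15 * (95/100 - (t2 + eta))) ltac:(unfold t2, eta; lra)).
    replace (INR 8) with 8 in B1, B2 by (simpl; ring).
    unfold t1, t2, eta in *. simpl in B1, B2. unfold X. lra. }
  apply Rle_ge. unfold E_beta. fold rho.
  apply Rle_trans with (iint d (fun l => sumr (fun b => W b l) 0 k)).
  { rewrite iint_sumr by auto. rewrite (sumr_const _ 0 k X HW). nra. }
  apply iint_le.
  - apply UCg_ext with (fun l => topk_max d k l * prl (fun _ => rho) d l).
    { intros l Hl; rewrite (prl_fold d rho l Hl); auto. }
    apply UCg_mul; [apply close_mono|apply UC_topk; auto|apply UC_prl; auto].
  - apply UC_sumr; auto.
  - intros l Hl. rewrite (prl_fold d rho l Hl).
    replace (sumr (fun b => W b l) 0 k) with (sumr (Vb psi1 psi2 t1 t2 m d l) 0 k * prl (fun _ => rho) d l).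
    + apply Rmult_le_compat_r.
      * apply prl_nonneg; auto. intros; apply rho_nonneg; auto.
      * apply topk_ge; auto. unfold t1, t2; lra.
    + rewrite sumr_mul. apply sumr_ext. intros b. unfold Vb, W.
      rewrite <- !Pb_prl. ring.
Qed.
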